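(* Let $n\ge 1$ and let $G$ be a graph on the vertex set $[n]=\{1,\dots,n\}$. Assume there exists an involution $\tau$ of $[n]$ (a permutation with $\tau^2=\mathrm{id}$, possibly with fixed points) such that every $3$-element subset $S\subseteq[n]$ satisfies $$|E(G[S])|+|E(G[\tau(S)])|\ge 2 .$$ Then $|E(G)|\ge |E(T(n))|=\binom{\lfloor n/2\rfloor}{2}+\binom{\lceil n/2\rceil}{2}$.
   Context: $G[A]$ denotes the subgraph of $G$ induced on the vertex subset $A$, and $\tau(S)=\{\tau(s):s\in S\}$. $T(n)$ denotes the graph on $[n]$ that is the disjoint union of two cliques of sizes $\lfloor n/2\rfloor$ and $\lceil n/2\rceil$. *)

(* Defs.v *)
From mathcomp Require Import all_boot all_fingroup.
Set Implicit Arguments. Unset Strict Implicit. Unset Printing Implicit Defensive.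

(* A simple graph on vertex set [n] (represented as 'I_n = {0,..,n-1})
   is a symmetric irreflexive boolean relation. *)
Definition simple_graph (n : nat) (e : rel 'I_n) : Prop :=
  irreflexive e /\ symmetric e.

Definition induced_edges (n : nat) (e : rel 'I_n) (A : {set 'I_n}) : nat :=
  #|[set p : 'I_n * 'I_n | [&& (p.1 < p.2)%N, p.1 \in A, p.2 \in A & e p.1 p.2]]|.

Definition num_edges (n : nat) (e : rel 'I_n) : nat := induced_edges e setT.

Definition turan2_edges (n : nat) : nat := 'C(n./2, 2) + 'C(uphalf n, 2).

(* Main.v *)
Require Import Defs.
From mathcomp Require Import all_boot all_fingroup zify.
Set Implicit Arguments. Unset Strict Implicit. Unset Printing Implicit Defensive.

Lemma turan_step m : turan2_edges m.+2 = turan2_edges m + m.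
Proof.
rewrite /turan2_edges /= !uphalf_half /= !binS !bin1.
have := odd_double_half m. lia.
Qed.

Lemma turan_ub k : 4 * turan2_edges k + k <= k * k.
Proof.
suff H : forall k, (4 * turan2_edges k + k <= k * k) /\ (4 * turan2_edges k.+1 + k.+1 <= k.+1 * k.+1) by case: (H k).
elim=> [|m [IH1 IH2]]; first by split.
split => //. rewrite turan_step. lia.
Qed.

Section Gen.
Variables (n : nat) (w : 'I_n -> 'I_n -> nat).
Hypothesis wsym : forall i j, w i j = w j i.
Hypothesis w0 : forall i, w i i = 0.
Hypothesis w3 : forall x y z, x != y -> y != z -> x != z -> 2 <= w x y + w x z + w y z.

Lemma gen k : forall A : {set 'I_n}, #|A| = k ->
  4 * turan2_edges k <= \sum_(i in A) \sum_(j in A) w i j.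
Proof.
elim/ltn_ind: k => k IH A HA.
case: (boolP [exists u in A, exists v in A, (u != v) && (w u v == 0)]).
- case/exists_inP => u uA /exists_inP [v vA /andP [uv /eqP wuv]].
  have vA' : v \in A :\ u by rewrite in_setD1 eq_sym uv.
  set B := A :\ u :\ v.
  have HB : #|B| = k - 2.
    move: (cardsD1 u A) (cardsD1 v (A :\ u)); rewrite uA vA' HA /B /=; lia.
  have k2 : 2 <= k.
    move: (cardsD1 u A) (cardsD1 v (A :\ u)); rewrite uA vA' -HA; lia.
  have := IH (k - 2) ltac:(lia) B HB.
  have split : forall F : 'I_n -> nat, \sum_(i in A) F i = F u + F v + \sum_(i in B) F i.
    by move=> F; rewrite (big_setD1 u uA) (big_setD1 v vA') -addnA.
  rewrite !split !w0 wuv (wsym v u) wuv.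
  rewrite [X in _ + X](eq_bigr (fun i => w i u + w i v + \sum_(j in B) w i j)); last by move=> i _; rewrite split.
  rewrite big_split /= big_split /=.
  have : 2 * #|B| <= \sum_(i in B) w u i + \sum_(i in B) w v i.
    rewrite -sum1_card big_distrr /= -big_split /= leq_sum // => i.
    rewrite !in_setD1 => /and3P [iv iu _].
    have := w3 (x:=u) (y:=v) (z:=i) uv; rewrite wuv eq_sym iv eq_sym iu => H.
    have := H isT isT. lia.
  have : \sum_(i in B) w i v = \sum_(i in B) w v i by apply: eq_bigr => i _; rewrite wsym.
  have : \sum_(i in B) w i u = \sum_(i in B) w u i by apply: eq_bigr => i _; rewrite wsym.
  have := turan_step (k - 2). rewrite (_ : (k - 2).+2 = k); last by lia.
  rewrite HB; move: (\sum_(i in B) w u i) (\sum_(i in B) w v i) (\sum_(i in B) w i u) (\sum_(i in B) w i v) (\sum_(i in B) \sum_(j in B) w i j) => a b c d f. lia.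
- rewrite negb_exists_in => /forall_inP Hno.
  have row : forall i, i \in A -> k <= \sum_(j in A) w i j + 1.
    move=> i iA.
    have -> : 1 = \sum_(j in A) (j == i : nat).
      rewrite (big_setD1 i iA) eqxx big1 // => j; rewrite in_setD1 => /andP [/negbTE -> _] //.
    rewrite -big_split /= -HA -sum1_card leq_sum // => j jA.
    case: (eqVneq j i) => [->|ji]; first lia.
    have := Hno i iA; rewrite negb_exists_in => /forall_inP /(_ j jA).
    rewrite eq_sym ji /=; lia.
  have : k * k <= \sum_(i in A) (\sum_(j in A) w i j + 1).
    rewrite -[X in X * _]HA -sum1_card big_distrl /= leq_sum // => i iA.
    by rewrite mul1n row.
  rewrite big_split /= sum1_card HA.
  have := turan_ub k. lia.
Qed.
End Gen.

Lemma dbl n (e : rel 'I_n) (S : {set 'I_n}) : irreflexive e -> symmetric e ->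
  2 * induced_edges e S = \sum_(i in S) \sum_(j in S) e i j.
Proof.
move=> irr sym.
have -> : induced_edges e S = \sum_(i : 'I_n) \sum_(j : 'I_n) ([&& i < j, i \in S, j \in S & e i j] : nat).
  rewrite pair_bigA /induced_edges -sum1_card big_mkcond /=.
  by apply: eq_big => // p _; rewrite inE; case: ifP.
rewrite mul2n -addnn {2}exchange_big /= -big_split [RHS]big_mkcond /=.
apply: eq_bigr => i _; rewrite -big_split /=.
case iS: (i \in S); last first.
  by rewrite big1 // => j _; rewrite /= !andbF.
rewrite /= [RHS]big_mkcond /=; apply: eq_bigr => j _.
case jS: (j \in S); rewrite /= ?andbF //.
case: (ltngtP i j) => [ij|ji|/val_inj ij] /=; [by rewrite addn0 | by rewrite (sym j i) | by rewrite ij irr].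

Qed.

Lemma sum3 n (F : 'I_n -> nat) x y z : x != y -> y != z -> x != z ->
  \sum_(i in x |: (y |: [set z])) F i = F x + F y + F z.
Proof.
move=> xy yz xz.
rewrite big_setU1 /=; last by rewrite !inE negb_or xy xz.
by rewrite big_setU1 /= ?big_set1 ?addnA // inE yz.
Qed.

Theorem mainTheorem1 (n : nat) (e : rel 'I_n) :
  (1 <= n)%N ->
  simple_graph e ->
  (exists tau : {perm 'I_n},
     (forall x, tau (tau x) = x) /\
     (forall S : {set 'I_n}, #|S| = 3 ->
        (2 <= induced_edges e S + induced_edges e (tau @: S))%N)) ->
  (turan2_edges n <= num_edges e)%N.
Proof.
move=> _ [irr sym] [tau [inv H]].
pose w := fun i j : 'I_n => (e i j + e (tau i) (tau j))%N.
have wsym : forall i j, w i j = w j i by move=> i j; rewrite /w sym (sym (tau j)).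
have w0 : forall i, w i i = 0 by move=> i; rewrite /w !irr.
have tS : forall S : {set 'I_n}, \sum_(i in tau @: S) \sum_(j in tau @: S) e i j =
    \sum_(i in S) \sum_(j in S) e (tau i) (tau j).
  move=> S; rewrite big_imset /=; last by move=> ? ? _ _; apply: perm_inj.
  by apply: eq_bigr => i _; rewrite big_imset //= => ? ? _ _; apply: perm_inj.
have w3 : forall x y z, x != y -> y != z -> x != z -> 2 <= w x y + w x z + w y z.
  move=> x y z xy yz xz.
  have c3 : #|x |: (y |: [set z])| = 3.
    by rewrite !cardsU1 cards1 !inE negb_or xy xz yz.
  have := H _ c3.
  move=> H2.
  have : 4 <= \sum_(i in x |: (y |: [set z])) \sum_(j in x |: (y |: [set z])) w i j.
    rewrite /w (eq_bigr (fun i => \sum_(j in x |: (y |: [set z])) e i j +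
      \sum_(j in x |: (y |: [set z])) e (tau i) (tau j))); last by move=> i _; rewrite big_split.
    rewrite big_split /= -tS -!dbl //; lia.
  rewrite !sum3 // !w0 (wsym y x) (wsym z x) (wsym z y); lia.
have := gen wsym w0 w3 (cardsT _).
rewrite card_ord.
have -> : \sum_(i in [set: 'I_n]) \sum_(j in [set: 'I_n]) w i j = 4 * num_edges e.
  rewrite /w (eq_bigr (fun i => \sum_(j in [set: 'I_n]) e i j +
      \sum_(j in [set: 'I_n]) e (tau i) (tau j))); last by move=> i _; rewrite big_split.
  rewrite big_split /= -tS.
  have -> : tau @: [set: 'I_n] = [set: 'I_n].
    by apply/setP => i; rewrite inE; apply/imsetP; exists (tau i); rewrite ?inE ?inv.
  rewrite -dbl // /num_edges; lia.
lia.
Qed.
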